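(* In the setting of the context, let $\mu^*\in U$ be such that $(\Phi,\mu^* )$ has no singular connection. Then $\{f_\mu\}_{\mu\in U}$ satisfies Hypothesis (E) at $\mu^*$.
   Context: Let $N\ge2$, $\lambda\in(0,1)$, and $\varphi_1,\dots,\varphi_N\colon[0,1]\to[0,1]$ bi-Lipschitz with Lipschitz constant $\le\lambda$, $\Phi=\{\varphi_i\}$, and assume $\varphi_i([0,1])\subset(0,1)$ for every $i$. Let $U=\{\mu=(\mu_1,\dots,\mu_{N-1}):0<\mu_1<\cdots<\mu_{N-1}<1\}$, $\mu_0=0$, $\mu_N=1$. For $\mu\in U$, $f_\mu\colon[0,1]\to[0,1]$ satisfies $f_\mu=\varphi_i$ on $A_{i,\mu}=(\mu_{i-1},\mu_i)$, and at each point of $S_\mu=\{0,\mu_1,\dots,\mu_{N-1},1\}$, $f_\mu$ is left or right continuous. For $\alpha=(i_0,\dots,i_{n-1})$, $\varphi^\alpha=\varphi_{i_{n-1}}\circ\cdots\circ\varphi_{i_0}$; $(\Phi,\mu)$ has a singular connection if $\varphi^\alpha(\mu_i)=\mu_j$ for some $n\ge1$, $\alpha\in\{1,\dots,N\}^n$, $i,j\in\{1,\dots,N-1\}$. A point $x$ is regular of order $n$ if $f_\mu^k(x)\notin S_\mu$ for $0\le k<n$; $\mathcal{I}_n(f_\mu)$ is the set of tuples $(i_0,\dots,i_{n-1})$ such that some regular point of order $n$ has $f_\mu^k(x)\in A_{i_k,\mu}$ for $0\le k<n$. With $U_\delta(\mu^* )=U\cap B_\delta(\mu^* )$ and $\mathcal{J}^\delta_n(\mu^*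 )=\bigcup_{\mu\in U_\delta(\mu^* )}\mathcal{I}_n(f_\mu)$, Hypothesis (E) at $\mu^*$ means $\lim_{\delta\to0^+}\limsup_{n\to\infty}\frac1n\log\#\mathcal{J}_n^\delta(\mu^* )=0$. *)

(* Defs.v *)
From HB Require Import structures.
From mathcomp Require Import all_boot all_order all_algebra.
From mathcomp Require Import all_classical all_reals all_analysis.
Set Implicit Arguments. Unset Strict Implicit. Unset Printing Implicit Defensive.
Import Order.TTheory GRing.Theory Num.Theory.
Local Open Scope ring_scope.

Section Defs.
Variables (R : realType) (N : nat).

(* Parameters mu = (mu_1,...,mu_{N-1}) are functions 'I_(N.-1) -> R;
   the coordinate k : 'I_(N.-1) stands for mu_{k+1}. *)
Definition param := 'I_(N.-1) -> R.

Definition mu_ext (mu : param) (k : nat) : R :=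
  if k == 0%N then 0
  else if (k < N)%N then (match insub k.-1 with Some j => mu j | None => 0 end : R)
  else 1.

Definition inU (mu : param) : Prop :=
  forall k : nat, (k < N)%N -> mu_ext mu k < mu_ext mu k.+1.

(* A_{i+1,mu} = (mu_i, mu_{i+1}) for i : 'I_N  (0-based index) *)
Definition inA (mu : param) (i : 'I_N) (x : R) : Prop :=
  mu_ext mu i < x < mu_ext mu i.+1.

Definition inS (mu : param) (x : R) : Prop :=
  x = 0 \/ x = 1 \/ exists j : 'I_(N.-1), x = mu j.

(* phi^alpha = phi_{i_{n-1}} o ... o phi_{i_0} for alpha = (i_0,...,i_{n-1}) *)
Definition phi_comp (phi : 'I_N -> R -> R) (alpha : seq 'I_N) (x : R) : R :=
  foldl (fun y i => phi i y) x alpha.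

Definition singular_connection (phi : 'I_N -> R -> R) (mu : param) : Prop :=
  exists (alpha : seq 'I_N) (i j : 'I_(N.-1)),
    (1 <= size alpha)%N /\ phi_comp phi alpha (mu i) = mu j.

Definition bi_lipschitz (lam : R) (g : R -> R) : Prop :=
  (forall x y, 0 <= x <= 1 -> 0 <= y <= 1 -> `|g x - g y| <= lam * `|x - y|) /\
  exists c : R, 0 < c /\
    forall x y, 0 <= x <= 1 -> 0 <= y <= 1 -> c * `|x - y| <= `|g x - g y|.

Definition left_cont01 (g : R -> R) (s : R) : Prop :=
  forall e, 0 < e -> exists d, 0 < d /\
    forall y, 0 <= y <= 1 -> s - d < y <= s -> `|g y - g s| < e.
Definition right_cont01 (g : R -> R) (s : R) : Prop :=
  forall e, 0 < e -> exists d, 0 < d /\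
    forall y, 0 <= y <= 1 -> s <= y < s + d -> `|g y - g s| < e.

Definition is_f (phi : 'I_N -> R -> R) (mu : param) (g : R -> R) : Prop :=
  (forall x, 0 <= x <= 1 -> 0 <= g x <= 1) /\
  (forall (i : 'I_N) x, inA mu i x -> g x = phi i x) /\
  (forall s, inS mu s -> 0 <= s <= 1 -> left_cont01 g s \/ right_cont01 g s).

Definition regular (mu : param) (g : R -> R) (n : nat) (x : R) : Prop :=
  0 <= x <= 1 /\ forall k, (k < n)%N -> ~ inS mu (iter k g x).

Definition itineraries (mu : param) (g : R -> R) (n : nat) (t : n.-tuple 'I_N) : Prop :=
  exists x, regular mu g n x /\ forall k : 'I_n, inA mu (tnth t k) (iter k g x).

Definition dist_param (mu nu : param) : R :=
  Num.sqrt (\sum_(k < N.-1) (mu k - nu k) ^+ 2).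

Definition Jset (f : param -> R -> R) (mustar : param) (delta : R) (n : nat)
  : {set n.-tuple 'I_N} :=
  [set t | `[< exists mu, inU mu /\ dist_param mu mustar < delta /\
                         itineraries mu (f mu) t >]].

Definition hypothesisE (f : param -> R -> R) (mustar : param) : Prop :=
  ((fun delta : R =>
      limn_esup (fun n : nat => ((n%:R)^-1 * ln (#|Jset f mustar delta n|%:R))%:E))
     @ at_right 0 --> (0 : \bar R))%classic.

End Defs.

(* Main.v *)
Require Import Defs.
From HB Require Import structures.
From mathcomp Require Import all_boot all_order all_algebra.
From mathcomp Require Import all_classical all_reals all_analysis.
From mathcomp Require Import lra zify.
Import Order.TTheory GRing.Theory Num.Theory.
Local Open Scope ring_scope.

Fixpoint follows (R : realType) (N : nat) (mu : param R N)
  (phi : 'I_N -> R -> R) (s : seq 'I_N) (y : R) : Prop :=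
  match s with
  | [::] => True
  | a :: s' => inA mu a y /\ follows R N mu phi s' (phi a y)
  end.
Arguments follows {R N}.

Lemma phi_comp_cons {R : realType} {N : nat} (phi : 'I_N -> R -> R) a s y :
  phi_comp phi (a :: s) y = phi_comp phi s (phi a y).
Proof. by []. Qed.

Lemma phi_comp_cat {R : realType} {N : nat} (phi : 'I_N -> R -> R) s1 s2 y :
  phi_comp phi (s1 ++ s2) y = phi_comp phi s2 (phi_comp phi s1 y).
Proof. by rewrite /phi_comp foldl_cat. Qed.

Lemma phi_comp_range {R : realType} {N : nat} (phi : 'I_N -> R -> R) :
  (forall i x, 0 <= x <= 1 -> 0 < phi i x < 1) ->
  forall s y, 0 <= y <= 1 -> 0 <= phi_comp phi s y <= 1.
Proof.
move=> Hr; elim=> [|a s IH] y Hy //.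
rewrite phi_comp_cons; apply: IH.
by have /andP[h1 h2] := Hr a y Hy; rewrite ltW // ltW.
Qed.

Lemma phi_comp_lip {R : realType} {N : nat} {lam : R} {phi : 'I_N -> R -> R} :
  0 <= lam ->
  (forall i, bi_lipschitz lam (phi i)) ->
  (forall i x, 0 <= x <= 1 -> 0 < phi i x < 1) ->
  forall s x y, 0 <= x <= 1 -> 0 <= y <= 1 ->
  `|phi_comp phi s x - phi_comp phi s y| <= lam ^+ (size s) * `|x - y|.
Proof.
move=> l0 Hl Hr; elim=> [|a s IH] x y Hx Hy; first by rewrite expr0 mul1r.
rewrite !phi_comp_cons.
have Hx' : 0 <= phi a x <= 1.
  by have /andP[h1 h2] := Hr a x Hx; rewrite ltW // ltW.
have Hy' : 0 <= phi a y <= 1.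
  by have /andP[h1 h2] := Hr a y Hy; rewrite ltW // ltW.
apply: (le_trans (IH _ _ Hx' Hy')).
rewrite exprSr -mulrA.
apply: ler_wpM2l; first exact: exprn_ge0.
by case: (Hl a) => H _; apply: H.
Qed.

Lemma phi_comp_lip1 {R : realType} {N : nat} {lam : R} {phi : 'I_N -> R -> R} :
  0 <= lam <= 1 ->
  (forall i, bi_lipschitz lam (phi i)) ->
  (forall i x, 0 <= x <= 1 -> 0 < phi i x < 1) ->
  forall s x y, 0 <= x <= 1 -> 0 <= y <= 1 ->
  `|phi_comp phi s x - phi_comp phi s y| <= `|x - y|.
Proof.
move=> /andP[l0 l1] Hl Hr s x y Hx Hy.
have := phi_comp_lip l0 Hl Hr s x y Hx Hy. move=> HH. apply: (le_trans HH).
rewrite -[X in _ <= X]mul1r; apply: ler_wpM2r => //.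
exact: exprn_ile1.
Qed.

Lemma follows_cat {R : realType} {N : nat} (mu : param R N) phi s1 s2 y :
  follows mu phi (s1 ++ s2) y <->
  follows mu phi s1 y /\ follows mu phi s2 (phi_comp phi s1 y).
Proof.
elim: s1 y => [|a s IH] y /=; first by split => [H|[]].
rewrite IH; split => [[h [h1 h2]]|[[h h1] h2]]; by [].
Qed.

Lemma mu_ext_mono {R : realType} {N : nat} (mu : param R N) :
  inU mu -> forall k l, (k <= l)%N -> (l <= N)%N -> Defs.mu_ext mu k <= Defs.mu_ext mu l.
Proof.
move=> HU k; elim=> [|l IH] Hkl HlN.
  by move: Hkl; rewrite leqn0 => /eqP->.
move: Hkl; rewrite leq_eqVlt => /orP[/eqP->//|Hkl].
apply: (le_trans (IH Hkl (ltnW HlN))).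
exact/ltW/HU.
Qed.

Lemma mu_ext0 {R : realType} {N : nat} (mu : param R N) : Defs.mu_ext mu 0 = 0.
Proof. by []. Qed.

Lemma mu_extN {R : realType} {N : nat} (mu : param R N) :
  (0 < N)%N -> Defs.mu_ext mu N = 1.
Proof. by move=> N0; rewrite /Defs.mu_ext ltnn; case: N N0 mu. Qed.

Lemma mu_ext_range {R : realType} {N : nat} (mu : param R N) :
  (0 < N)%N -> inU mu -> forall k, (k <= N)%N -> 0 <= Defs.mu_ext mu k <= 1.
Proof.
move=> N0 HU k Hk; apply/andP; split.
  by rewrite -(mu_ext0 mu); apply: mu_ext_mono.
by rewrite -(mu_extN mu N0); apply: mu_ext_mono.
Qed.

Lemma mu_ext_int {R : realType} {N : nat} (mu : param R N) i :
  (0 < i)%N -> (i < N)%N -> exists j : 'I_(N.-1), Defs.mu_ext mu i = mu j /\ val j = i.-1.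
Proof.
move=> i0 iN; rewrite /Defs.mu_ext (negbTE (lt0n_neq0 i0)) iN /=.
case: insubP => [j _ Ho|/negP []].
  by exists j.
by rewrite -ltnS (ltn_predK i0) (ltn_predK iN).
Qed.

Definition close {R : realType} {N : nat} (mu mustar : param R N) (delta : R) :=
  forall k, `|Defs.mu_ext mu k - Defs.mu_ext mustar k| <= delta.

Lemma branch0 {R : realType} {N : nat} (mustar mu mu' : param R N) (delta r : R)
  (a b : 'I_N) (z z' : R) :
  inU mu -> close mu mustar delta -> close mu' mustar delta -> (a < b)%N ->
  inA mu a z -> inA mu' b z' -> `|z - z'| <= r ->
  `|z - Defs.mu_ext mustar b| <= delta + r.
Proof.
move=> HU c c' ab /andP[z1 z2] /andP[z1' z2'] zz.
have m1 : Defs.mu_ext mu a.+1 <= Defs.mu_ext mu b.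
  by apply: mu_ext_mono => //; apply: ltnW.
have := c b; have := c' b; move: zz.
rewrite !ler_norml => /andP[h1 h2] /andP[h3 h4] /andP[h5 h6].
apply/andP; split; lra.
Qed.

Definition Br {N : nat} (W : seq 'I_N -> Prop) (p : seq 'I_N) :=
  exists a b t t', a != b /\ W (p ++ a :: t) /\ W (p ++ b :: t').

Lemma first_diff {T : eqType} (s s' : seq T) :
  size s = size s' -> s <> s' ->
  exists p a b t t', a != b /\ s = p ++ a :: t /\ s' = p ++ b :: t'.
Proof.
elim: s s' => [|x s IH] [|x' s'] Hs Hne //=.
case: Hs => Hs.
have [E0|xx] := eqVneq x x'.
  subst x'.
  have Hne' : s <> s' by move=> E; apply: Hne; rewrite E.
  have [p [a [b [t [t' [ab [E1 E2]]]]]]] := IH s' Hs Hne'.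
  by exists (x :: p), a, b, t, t'; rewrite E1 E2.
by exists [::], x, x', s, s'.
Qed.


Lemma brB {R : realType} {N : nat} (lam : R) (phi : 'I_N -> R -> R)
  (mustar : param R N) (W : seq 'I_N -> Prop) (P : R -> Prop) (delta r : R) :
  0 <= lam <= 1 -> (forall i, bi_lipschitz lam (phi i)) ->
  (forall i x, 0 <= x <= 1 -> 0 < phi i x < 1) ->
  (forall y, P y -> 0 <= y <= 1) ->
  (forall y y', P y -> P y' -> `|y - y'| <= r) ->
  (forall s, W s -> exists y mu, P y /\ inU mu /\ close mu mustar delta /\
                                 follows mu phi s y) ->
  forall p, Br W p -> exists y (j : 'I_N), P y /\ (0 < j)%N /\
    `|phi_comp phi p y - Defs.mu_ext mustar j| <= delta + r.
Proof.
move=> Hlam Hl Hr HP01 HPr HW p [a [b [t [t' [ab [W1 W2]]]]]].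
have [y [mu [Py [HU [Hc Hf]]]]] := HW _ W1.
have [y' [mu' [Py' [HU' [Hc' Hf']]]]] := HW _ W2.
move/follows_cat: Hf => [_ /= [Ha _]].
move/follows_cat: Hf' => [_ /= [Hb _]].
have Hzz : `|phi_comp phi p y - phi_comp phi p y'| <= r.
  apply: le_trans (HPr _ _ Py Py').
  exact: (phi_comp_lip1 Hlam Hl Hr p y y' (HP01 _ Py) (HP01 _ Py')).
case: (ltngtP a b) => [lt|gt|eq].
- exists y, b; split => //; split; first by apply: leq_ltn_trans lt.
  exact: (branch0 _ _ _ _ _ _ _ _ _ HU Hc Hc' lt Ha Hb Hzz).
- exists y', a; split => //; split; first by apply: leq_ltn_trans gt.
  by apply: (branch0 _ _ _ _ _ _ _ _ _ HU' Hc' Hc gt Hb Ha); rewrite distrC.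
- by move: ab; rewrite (val_inj eq) eqxx.
Qed.

Lemma brC {R : realType} {N : nat} (lam : R) (phi : 'I_N -> R -> R)
  (mustar : param R N) (W : seq 'I_N -> Prop) (P : R -> Prop) (m : nat)
  (delta r d : R) :
  (0 < N)%N -> inU mustar ->
  0 <= lam <= 1 -> (forall i, bi_lipschitz lam (phi i)) ->
  (forall i x, 0 <= x <= 1 -> 0 < phi i x < 1) ->
  (forall y, P y -> 0 <= y <= 1) ->
  (forall y y', P y -> P y' -> `|y - y'| <= r) ->
  (forall s, W s -> exists y mu, P y /\ inU mu /\ close mu mustar delta /\
                                 follows mu phi s y) ->
  (forall q, (1 <= size q <= m)%N -> forall i j : nat, (0 < i < N)%N -> (0 < j < N)%N ->
     d <= `|phi_comp phi q (Defs.mu_ext mustar i) - Defs.mu_ext mustar j|) ->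
  2 * delta + 3 * r < d ->
  forall p q, Br W p -> Br W (p ++ q) -> (1 <= size q <= m)%N -> False.
Proof.
move=> N0 HUs Hlam Hl Hr HP01 HPr HW Hd Hsm p q B1 B2 Hq.
have [y1 [j1 [P1 [j10 H1]]]] := brB _ _ _ _ _ _ _ Hlam Hl Hr HP01 HPr HW _ B1.
have [y2 [j2 [P2 [j20 H2]]]] := brB _ _ _ _ _ _ _ Hlam Hl Hr HP01 HPr HW _ B2.
have := Hd q Hq j1 j2; rewrite ?j10 ?j20 ?ltn_ord => /(_ isT isT) Hdd.
have Hm1 := mu_ext_range mustar N0 HUs j1 (ltnW (ltn_ord j1)).
have HZ1 := phi_comp_range phi Hr p y1 (HP01 _ P1).
have HA : `|phi_comp phi q (Defs.mu_ext mustar j1) - phi_comp phi q (phi_comp phi p y1)| <= delta + r.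
  apply: le_trans (phi_comp_lip1 Hlam Hl Hr q _ _ Hm1 HZ1) _.
  by rewrite distrC.
have HB : `|phi_comp phi q (phi_comp phi p y1) - phi_comp phi (p ++ q) y2| <= r.
  rewrite -phi_comp_cat; apply: le_trans (HPr _ _ P1 P2).
  exact: (phi_comp_lip1 Hlam Hl Hr _ y1 y2 (HP01 _ P1) (HP01 _ P2)).
move: Hdd HA HB H2.
set A := phi_comp phi q _; set B := phi_comp phi q _; set C := phi_comp phi _ y2.
set D := Defs.mu_ext mustar j2.
rewrite ler_normr !ler_norml => /orP[h|h] /andP[h1 h2] /andP[h3 h4] /andP[h5 h6]; lra.
Qed.

Lemma key_inj {R : realType} {N : nat} (lam : R) (phi : 'I_N -> R -> R)
  (mustar : param R N) (W : seq 'I_N -> Prop) (P : R -> Prop) (m : nat)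
  (delta r d : R) (i0 : 'I_N) :
  (0 < N)%N -> inU mustar ->
  0 <= lam <= 1 -> (forall i, bi_lipschitz lam (phi i)) ->
  (forall i x, 0 <= x <= 1 -> 0 < phi i x < 1) ->
  (forall y, P y -> 0 <= y <= 1) ->
  (forall y y', P y -> P y' -> `|y - y'| <= r) ->
  (forall s, W s -> exists y mu, P y /\ inU mu /\ close mu mustar delta /\
                                 follows mu phi s y) ->
  (forall s, W s -> size s = m) ->
  (forall q, (1 <= size q <= m)%N -> forall i j : nat, (0 < i < N)%N -> (0 < j < N)%N ->
     d <= `|phi_comp phi q (Defs.mu_ext mustar i) - Defs.mu_ext mustar j|) ->
  2 * delta + 3 * r < d ->
  exists g : seq 'I_N -> 'I_N, forall s s', W s -> W s' -> g s = g s' -> s = s'.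
Proof.
move=> N0 HUs Hlam Hl Hr HP01 HPr HW HWs Hd Hsm.
have HC := brC _ _ _ _ _ _ _ _ _ N0 HUs Hlam Hl Hr HP01 HPr HW Hd Hsm.
have HFD : forall s s', W s -> W s' -> s <> s' -> exists p a b t t',
    Br W p /\ a != b /\ s = p ++ a :: t /\ s' = p ++ b :: t'.
  move=> s s' Ws Ws' ne.
  have [p [a [b [t [t' [ab [E1 E2]]]]]]] := first_diff _ _ (etrans (HWs _ Ws) (esym (HWs _ Ws'))) ne.
  exists p, a, b, t, t'; split => //.
  by exists a, b, t, t'; rewrite -E1 -E2.
case: (pselect (exists p, Br W p)) => [[p1 Hp1]|nob]; last first.
  exists (fun _ => i0) => s s' Ws Ws' _; apply: contrapT => ne.
  have [p [a [b [t [t' [Bp _]]]]]] := HFD s s' Ws Ws' ne.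
  by apply: nob; exists p.
pose Pk := fun k => `[< exists p, size p = k /\ Br W p >].
have exk : exists k, Pk k by exists (size p1); apply/asboolP; exists p1.
case: (ex_minnP exk) => k0 /asboolP [p0 [Hs0 Hb0]] Hmin.
have Hmin' : forall p, Br W p -> (size p0 <= size p)%N.
  by move=> p Bp; rewrite Hs0; apply: Hmin; apply/asboolP; exists p.
have pref : forall s, W s -> take (size p0) s = p0 /\ (size p0 < size s)%N.
  move: Hb0 => [a [b [t [t' [_ [Ws1 _]]]]]] s Ws.
  have sz : (size p0 < size s)%N.
    by rewrite (HWs _ Ws) -(HWs _ Ws1) size_cat /= addnS ltnS leq_addr.
  split => //.
  have [->|ne] := eqVneq s (p0 ++ a :: t); first by rewrite take_size_cat.
  have [p [x [y [u [u' [Bp [_ [E1 E2]]]]]]]] := HFD _ _ Ws Ws1 (elimN eqP ne).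
  have le := Hmin' _ Bp.
  rewrite E1 takel_cat //.
  have := congr1 (take (size p0)) E2.
  by rewrite take_size_cat // takel_cat.
exists (fun s => nth i0 s (size p0)) => s s' Ws Ws' geq.
apply: contrapT => ne.
have [p [x [y [u [u' [Bp [xy [E1 E2]]]]]]]] := HFD _ _ Ws Ws' ne.
have le := Hmin' _ Bp.
move: le; rewrite leq_eqVlt => /orP[/eqP Eq|lt].
  move: geq; rewrite E1 E2 !nth_cat Eq ltnn subnn /= => xy'.
  by move: xy; rewrite xy' eqxx.
have [Hp0 _] := pref _ Ws.
have Ep : p = p0 ++ drop (size p0) p.
  have T : take (size p0) p = p0.
    by rewrite -[RHS]Hp0 E1 takel_cat //; apply: ltnW.
  by rewrite -{1}(cat_take_drop (size p0) p) T.
apply: (HC p0 (drop (size p0) p) Hb0); first by rewrite -Ep.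
rewrite size_drop subn_gt0 lt /= leq_subLR.
have := HWs _ Ws; rewrite E1 size_cat /= => <-.
lia.
Qed.

Lemma close_of_dist {R : realType} {N : nat} (mu mustar : param R N) (delta : R) :
  dist_param mu mustar < delta -> close mu mustar delta.
Proof.
move=> Hd k.
have d0 : 0 <= delta by apply: le_trans (ltW Hd); exact: sqrtr_ge0.
rewrite /Defs.mu_ext; case: (k == 0%N); first by rewrite subrr normr0.
case: (k < N)%N; last by rewrite subrr normr0.
case: insubP => [j _ _|_]; last by rewrite subrr normr0.
apply: le_trans (ltW Hd).
rewrite -sqrtr_sqr /dist_param; apply: ler_wsqrtr.
rewrite (bigD1 j) //= lerDl; apply: sumr_ge0 => i _; exact: sqr_ge0.
Qed.

Lemma iter_follows {R : realType} {N : nat} (phi : 'I_N -> R -> R) (mu : param R N)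
  (g : R -> R) (i0 : 'I_N) :
  is_f phi mu g ->
  forall s x, 0 <= x <= 1 ->
  (forall k, (k < size s)%N -> inA mu (nth i0 s k) (iter k g x)) ->
  follows mu phi s x.
Proof.
move=> [Hg01 [HgA _]]; elim=> [|a s IH] x Hx Hk //=.
have Ha : inA mu a x by apply: (Hk 0%N).
split => //.
rewrite -(HgA a x Ha); apply: IH; first exact: Hg01.
by move=> k Hks; rewrite -iterSr; apply: (Hk k.+1).
Qed.

Definition pre {T : Type} {n m : nat} (x0 : T) (t : (n + m).-tuple T) : n.-tuple T :=
  insubd (nseq_tuple n x0) (take n t).

Lemma pre_val {T : Type} {n m : nat} (x0 : T) (t : (n + m).-tuple T) :
  val (pre x0 t) = take n t.
Proof.
rewrite /pre insubdK //.
by rewrite unfold_in /= size_takel // size_tuple leq_addr.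
Qed.

Lemma J_pre {R : realType} {N : nat} (f : param R N -> R -> R) (mustar : param R N)
  (delta : R) (n m : nat) (i0 : 'I_N) (t : (n + m).-tuple 'I_N) :
  t \in Jset f mustar delta (n + m) -> pre i0 t \in Jset f mustar delta n.
Proof.
rewrite /Jset !inE => -[mu [HU [Hd [x [[Hx Hreg] Hit]]]]].
exists mu; split => //; split => //; exists x; split.
  split => // k kn; apply: Hreg; exact: ltn_addr.
move=> k; have := Hit (widen_ord (leq_addr m n) k).
by rewrite (tnth_nth i0) (tnth_nth i0) pre_val nth_take.
Qed.

Lemma J_step {R : realType} {N : nat} (lam : R) (phi : 'I_N -> R -> R)
  (f : param R N -> R -> R) (mustar : param R N) (d delta : R) (n m : nat)
  (i0 : 'I_N) :
  (0 < N)%N -> inU mustar ->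
  0 <= lam <= 1 -> (forall i, bi_lipschitz lam (phi i)) ->
  (forall i x, 0 <= x <= 1 -> 0 < phi i x < 1) ->
  (forall mu, inU mu -> is_f phi mu (f mu)) ->
  (forall q, (1 <= size q <= m)%N -> forall i j : nat, (0 < i < N)%N -> (0 < j < N)%N ->
     d <= `|phi_comp phi q (Defs.mu_ext mustar i) - Defs.mu_ext mustar j|) ->
  2 * delta + 3 * lam ^+ n < d ->
  (#|Jset f mustar delta (n + m)| <= #|Jset f mustar delta n| * N)%N.
Proof.
move=> N0 HUs Hlam Hl Hr Hfis Hd Hsm.
pose W (u : seq 'I_N) (s : seq 'I_N) := exists t : (n + m).-tuple 'I_N,
  t \in Jset f mustar delta (n + m) /\ take n t = u /\ drop n t = s.
pose P (u : seq 'I_N) (y : R) := exists x, 0 <= x <= 1 /\ y = phi_comp phi u x.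
have HK : forall u, exists g : seq 'I_N -> 'I_N, size u = n ->
    forall s s', W u s -> W u s' -> g s = g s' -> s = s'.
  move=> u; case: (eqVneq (size u) n) => [Hu|Hu]; last first.
    by exists (fun _ => i0) => E; move: Hu; rewrite E eqxx.
  have HP01 : forall y, P u y -> 0 <= y <= 1.
    by move=> y [x [Hx ->]]; apply: phi_comp_range.
  have HPr : forall y y', P u y -> P u y' -> `|y - y'| <= lam ^+ n.
    move=> y y' [x [Hx ->]] [x' [Hx' ->]].
    case/andP: Hlam => l0 l1.
    apply: le_trans (phi_comp_lip l0 Hl Hr u x x' Hx Hx') _.
    rewrite Hu -[X in _ <= X]mulr1; apply: ler_wpM2l; first exact: exprn_ge0.
    move: Hx Hx' => /andP[a1 a2] /andP[b1 b2].
    rewrite ler_norml; apply/andP; split; lra.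
  have HW : forall s, W u s -> exists y mu, P u y /\ inU mu /\
      close mu mustar delta /\ follows mu phi s y.
    move=> s [t [Ht [Et Es]]].
    move: Ht; rewrite /Jset inE => /asboolP [mu [HU [Hdist [x [[Hx _] Hit]]]]].
    have Hf : follows mu phi t x.
      apply: (iter_follows _ _ _ i0 (Hfis mu HU) _ _ Hx) => k Hk.
      rewrite size_tuple in Hk; have := Hit (Ordinal Hk).
      by rewrite (tnth_nth i0).
    move: Hf; rewrite -(cat_take_drop n t) Et Es => /follows_cat [_ Hf2].
    exists (phi_comp phi u x), mu; split; first by exists x.
    split => //; split => //; exact: close_of_dist.
  have HWs : forall s, W u s -> size s = m.
    by move=> s [t [_ [_ <-]]]; rewrite size_drop size_tuple addKn.
  have [g Hg] := key_inj lam phi mustar (W u) (P u) m delta (lam ^+ n) d i0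
    N0 HUs Hlam Hl Hr HP01 HPr HW HWs Hd Hsm.
  by exists g.
have [G HG] := choice HK.
pose h := fun t : (n + m).-tuple 'I_N => (pre i0 t, G (val (pre i0 t)) (drop n t)).
have hinj : {in Jset f mustar delta (n + m) &, injective h}.
  move=> t t' Ht Ht' [E1 E2].
  have Et : take n t = take n t' by rewrite -(pre_val i0 t) -(pre_val i0 t') E1.
  apply: val_inj => /=.
  rewrite -(cat_take_drop n t) -(cat_take_drop n t') Et; congr (_ ++ _).
  move: E2; rewrite !pre_val Et => E2.
  apply: (HG (take n t')) => //.
  - by rewrite size_takel // size_tuple leq_addr.
  - by exists t.
  - by exists t'.
rewrite -(card_in_imset hinj).
apply: (@leq_trans #|finset.setX (Jset f mustar delta n) [set: 'I_N]|).
  apply: subset_leq_card; apply/fintype.subsetP => _ /imsetP [t Ht ->].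
  by rewrite inE /= J_pre // inE.
by rewrite cardsX cardsT card_ord.
Qed.

Lemma fin_min {R : realType} (T : finType) (g : T -> R) :
  (forall t, 0 < g t) -> exists d, 0 < d /\ forall t, d <= g t.
Proof.
move=> Hg.
suff : forall s : seq T, exists d, 0 < d /\ forall t, t \in s -> d <= g t.
  by case/(_ (enum T)) => d [d0 Hd]; exists d; split => // t; apply: Hd; rewrite mem_enum.
elim=> [|a s [d [d0 Hd]]]; first by exists 1.
exists (Num.min d (g a)); split; first by rewrite lt_min d0 Hg.
move=> t; rewrite in_cons => /orP[/eqP->|ts]; rewrite ge_min.
  by rewrite lexx orbT.
by rewrite Hd.
Qed.

Lemma no_conn_dA {R : realType} {N : nat} (phi : 'I_N -> R -> R) (mustar : param R N) :
  ~ singular_connection phi mustar ->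
  forall m, exists d, 0 < d /\ forall q, (1 <= size q <= m)%N ->
    forall i j : 'I_(N.-1), d <= `|phi_comp phi q (mustar i) - mustar j|.
Proof.
move=> Hnc; elim=> [|m [d1 [d10 Hd1]]].
  by exists 1; split => // q; rewrite leqn0 => /andP[H1 /eqP H2]; rewrite H2 in H1.
pose g := fun x : (m.+1).-tuple 'I_N * 'I_(N.-1) * 'I_(N.-1) =>
  `|phi_comp phi (val x.1.1) (mustar x.1.2) - mustar x.2|.
have [d2 [d20 Hd2]] : exists d, 0 < d /\ forall t, d <= g t.
  apply: fin_min => -[[t i] j]; rewrite /g /= normr_gt0 subr_eq0.
  apply/eqP => E; apply: Hnc; exists (val t), i, j; split => //.
  by rewrite size_tuple.
exists (Num.min d1 d2); split; first by rewrite lt_min d10 d20.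
move=> q /andP[q1 q2] i j; rewrite ge_min.
move: q2; rewrite leq_eqVlt => /orP[/eqP Hs|Hs].
  apply/orP; right.
  have Hs' : size q == m.+1 by rewrite Hs.
  exact: (Hd2 (Tuple Hs', i, j)).
by rewrite Hd1 // q1.
Qed.

Lemma no_conn_d {R : realType} {N : nat} (phi : 'I_N -> R -> R) (mustar : param R N) :
  ~ singular_connection phi mustar ->
  forall m, exists d, 0 < d /\ forall q, (1 <= size q <= m)%N ->
    forall i j : nat, (0 < i < N)%N -> (0 < j < N)%N ->
    d <= `|phi_comp phi q (Defs.mu_ext mustar i) - Defs.mu_ext mustar j|.
Proof.
move=> Hnc m; have [d [d0 Hd]] := no_conn_dA phi mustar Hnc m.
exists d; split => // q Hq i j /andP[i0 iN] /andP[j0 jN].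
have [oi [-> _]] := mu_ext_int mustar i i0 iN.
have [oj [-> _]] := mu_ext_int mustar j j0 jN.
exact: Hd.
Qed.

Lemma count_bound (c : nat -> nat) (N m n0 : nat) :
  (0 < N)%N -> (0 < m)%N ->
  (forall n, (n0 <= n)%N -> (c (n + m) <= c n * N)%N) ->
  (forall n, (c n <= N ^ n)%N) ->
  forall n, (c n <= N ^ (n0 + m + n %/ m))%N.
Proof.
move=> N0 m0 Hstep Htriv; elim/ltn_ind => n IH.
case: (ltnP n (n0 + m)) => Hn.
  apply: leq_trans (Htriv n) _; apply: leq_pexp2l => //.
  by apply: leq_trans (ltnW Hn) _; apply: leq_addr.
have Hk : n = (n - m + m)%N by lia.
rewrite Hk; apply: leq_trans (Hstep (n - m)%N _) _; first by lia.
rewrite divnDr ?dvdnn // divnn m0 addnA expnD expn1 leq_mul2r IH ?orbT //; lia.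
Qed.

Lemma eps_bound {R : realType} {N : nat} (lam : R) (phi : 'I_N -> R -> R)
  (f : param R N -> R -> R) (mustar : param R N) :
  (2 <= N)%N -> 0 < lam < 1 ->
  (forall i, bi_lipschitz lam (phi i)) ->
  (forall i x, 0 <= x <= 1 -> 0 < phi i x < 1) ->
  (forall mu, inU mu -> is_f phi mu (f mu)) ->
  inU mustar -> ~ singular_connection phi mustar ->
  forall eps : R, 0 < eps -> exists delta0 : R, 0 < delta0 /\ forall delta : R, 0 < delta < delta0 ->
   exists n1, forall n, (n1 <= n)%N ->
     (n%:R)^-1 * ln (#|Jset f mustar delta n|%:R) <= eps.
Proof.
move=> HN /andP[l0 l1] Hl Hr Hfis HUs Hnc eps eps0.
have N0 : (0 < N)%N by apply: leq_trans HN.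
pose i0 := Ordinal N0.
have Hlam : 0 <= lam <= 1 by rewrite ltW // ltW.
pose L := ln (N%:R : R).
have L0 : 0 <= L by apply: ln_ge0; rewrite ler1n.
pose m := (Num.Def.trunc (2 * L / eps)).+1.
have Hm : 2 * L / eps < m%:R := truncnS_gt _.
have m0 : (0 < m)%N by [].
have HmL : L <= eps / 2 * m%:R.
  move: Hm; rewrite ltr_pdivrMr // => Hm; lra.
have [d [d0 Hd]] := no_conn_d phi mustar Hnc m.
have [n0 Hn0] : exists n0, forall n, (n0 <= n)%N -> lam ^+ n < d / 6.
  have Hl1 : `|lam| < 1 by rewrite ger0_norm // ltW.
  have := cvg_expr Hl1; move/cvgr0Pnorm_lt => /(_ (d / 6)) [].
    by apply: divr_gt0.
  move=> n0 _ Hn0; exists n0 => n nn0.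
  have H6 := Hn0 n nn0. rewrite ger0_norm in H6 => //. exact: exprn_ge0 (ltW l0).
exists (d / 4); split; first by apply: divr_gt0.
move=> delta /andP[dl0 dl1].
have Hstep : forall n, (n0 <= n)%N ->
    (#|Jset f mustar delta (n + m)| <= #|Jset f mustar delta n| * N)%N.
  move=> n nn0; apply: (J_step lam phi f mustar d delta n m i0) => //.
  have := Hn0 n nn0; lra.
have Htriv : forall n, (#|Jset f mustar delta n| <= N ^ n)%N.
  move=> n; apply: leq_trans (max_card _) _; by rewrite card_tuple card_ord.
have Hcb := count_bound (fun n => #|Jset f mustar delta n|) N m n0 N0 m0 Hstep Htriv.
pose n1 := maxn n0 (Num.Def.trunc (2 * ((n0 + m)%:R * L) / eps)).+1.
exists n1 => n Hn.
have Hn2 : 2 * ((n0 + m)%:R * L) / eps < n%:R.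
  apply: lt_le_trans (truncnS_gt _) _; rewrite ler_nat.
  by apply: leq_trans Hn; rewrite leq_max leqnn orbT.
have npos : (0 < n)%N.
  by apply: leq_trans Hn; rewrite leq_max ltn0Sn orbT.
have Hln : ln (#|Jset f mustar delta n|%:R) <= (n0 + m + n %/ m)%:R * L.
  case: (posnP #|Jset f mustar delta n|) => [->|cpos].
    by rewrite ln0 // mulr_ge0.
  apply: le_trans (_ : ln ((N ^ (n0 + m + n %/ m))%:R) <= _).
    by rewrite ler_ln ?posrE ?ltr0n ?expn_gt0 ?N0 // ler_nat; exact: Hcb.
  by rewrite natrX lnXn ?ltr0n // mulr_natl.
have Hdiv : (n %/ m)%:R * m%:R <= n%:R :> R.
  by rewrite -natrM ler_nat leq_trunc_div.
rewrite ler_pdivrMl ?ltr0n //.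
apply: le_trans Hln _.
rewrite natrD mulrDl.
move: Hn2; rewrite ltr_pdivrMr // => Hn2.
have Hq0 : 0 <= (n %/ m)%:R :> R by [].
have H1 : (n %/ m)%:R * L <= (n %/ m)%:R * (eps / 2 * m%:R) by apply: ler_wpM2l.
have H2 : eps / 2 * ((n %/ m)%:R * m%:R) <= eps / 2 * n%:R.
  by apply: ler_wpM2l => //; apply: divr_ge0 => //; apply: ltW.
have E : (n %/ m)%:R * (eps / 2 * m%:R) = eps / 2 * ((n %/ m)%:R * m%:R) :> R.
  by rewrite mulrCA mulrA.
move: H1 H2 E Hn2; set A := (n0 + m)%:R * L; set B := (n %/ m)%:R * L.
set C := (n %/ m)%:R * (eps / 2 * m%:R); set D := eps / 2 * (_ * _).
move=> H1 H2 E Hn2; rewrite -/A -/B. lra.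
Qed.

Theorem lemma4p5 (R : realType) (N : nat) (lam : R)
  (phi : 'I_N -> R -> R) (f : param R N -> R -> R) (mustar : param R N) :
  (2 <= N)%N ->
  0 < lam < 1 ->
  (forall i, bi_lipschitz lam (phi i)) ->
  (forall i x, 0 <= x <= 1 -> 0 < phi i x < 1) ->
  (forall mu, inU mu -> is_f phi mu (f mu)) ->
  inU mustar ->
  ~ singular_connection phi mustar ->
  hypothesisE f mustar.
Proof.
move=> HN Hlam Hl Hr Hfis HUs Hnc.
have Heps := eps_bound lam phi f mustar HN Hlam Hl Hr Hfis HUs Hnc.
rewrite /hypothesisE.
set S := (fun delta : R => _).
have S0 : forall delta, (0 <= S delta)%E.
  move=> delta; rewrite /S; apply: limf_esup_ge0.
    exact: filter_not_empty.
  move=> n /=; rewrite lee_fin; apply: mulr_ge0; first by rewrite invr_ge0.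
  case: (posnP #|Jset f mustar delta n|) => [->|cpos]; first by rewrite ln0.
  by apply: ln_ge0; rewrite ler1n.
have Sle : forall eps : R, 0 < eps ->
    (\forall delta \near 0^'+, (S delta <= eps%:E)%E)%classic.
  move=> eps eps0; have [d0 [d00 Hd0]] := Heps eps eps0.
  apply: (filterS2 _ _ (nbhs_right_gt 0) (nbhs_right_lt d00)) => delta h1 h2.
  have := Hd0 delta; rewrite h1 h2 => /(_ isT) [n1 Hn1].
  rewrite /S /limn_esup limf_esupE.
  apply: (@le_trans _ _ (ereal_sup ((fun n : nat => ((n%:R)^-1 * ln (#|Jset f mustar delta n|%:R))%:E) @` [set n | (n1 <= n)%N]))%classic).
    apply: ereal_inf_lbound; exists [set n | (n1 <= n)%N]%classic => //.
    by exists n1.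
  apply: ge_ereal_sup => _ [n /= Hn <-].
  by rewrite lee_fin; apply: Hn1.
apply/fine_cvgP; split.
  apply: filterS (Sle 1 ltr01) => delta h.
  by rewrite ge0_fin_numE //; apply: le_lt_trans h _; exact: ltry.
apply/cvgrPdist_le => e e0.
apply: filterS (Sle e e0) => delta h.
have h0 := S0 delta; move: h h0.
rewrite /fine /=; case: (S delta) => [r||] //=; rewrite !lee_fin => h1 h2.
by rewrite sub0r normrN ger0_norm.
Qed.
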